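(* Let $Y$ be a nonnegative random variable with mean $\mu$ and variance $\sigma^2$, both finite and positive, and let $Y^s$ be defined on the same probability space as $Y$, have the $Y$-size bias distribution, and satisfy $Y^s\ge Y$ with probability one. Let $W=(Y-\mu)/\sigma$ and $W^s=(Y^s-\mu)/\sigma$. Then for any $z\in\mathbb{R}$ and $a>0$, $$\frac{\mu}{\sigma}E\left[(W^s-W)\mathbf{1}_{\{W^s-W\le a\}}\mathbf{1}_{\{z\le W\le z+a\}}\right]\le a.$$
   Context: For a nonnegative random variable $Y$ with finite positive mean $\mu$, a random variable $Y^s$ has the $Y$-size bias distribution if $E[Yg(Y)]=\mu E[g(Y^s)]$ for all bounded continuous functions $g$. *)

(* Defs.v *)
From HB Require Import structures.
From mathcomp Require Import all_boot all_order all_algebra.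
From mathcomp Require Import all_classical all_reals all_analysis.
Set Implicit Arguments. Unset Strict Implicit. Unset Printing Implicit Defensive.
Import Order.TTheory GRing.Theory Num.Theory numFieldNormedType.Exports.
Local Open Scope ring_scope.

Definition size_bias d (T : measurableType d) (R : realType)
  (P : probability T R) (Y Ys : T -> R) : Prop :=
  forall g : R -> R, continuous g -> (exists M : R, forall x, `|g x| <= M) ->
    ('E_P[fun w => (Y w * g (Y w))%R] = 'E_P[Y] * 'E_P[fun w => g (Ys w)])%E.

(* Main.v *)
Require Import Defs.
From HB Require Import structures.
From mathcomp Require Import all_boot all_order all_algebra.
From mathcomp Require Import all_classical all_reals all_analysis.
From mathcomp Require Import ring lra measurable_realfun.
Import Order.TTheory GRing.Theory Num.Theory numFieldNormedType.Exports.
Local Open Scope classical_set_scope.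
Local Open Scope ring_scope.

Section helpers.
Context d (T : measurableType d) (R : realType) (P : probability T R).

Lemma int_bdd (f : T -> R) : measurable_fun setT f -> (exists M, forall x, `|f x| <= M) ->
  P.-integrable setT (EFin \o f).
Proof.
move=> mf [M hM]; apply: measurable_bounded_integrable => //.
- by apply: (le_lt_trans (probability_le1 _ _)) => //; rewrite ltry.
- exists M; split; first by rewrite num_real.
  move=> y My x _; exact: le_trans (hM x) (ltW My).
Qed.

Lemma expect_le_ae (f g : T -> R) :
  P.-integrable setT (EFin \o f) -> P.-integrable setT (EFin \o g) ->
  {ae P, forall x, f x <= g x} -> ('E_P[f] <= 'E_P[g])%E.
Proof.
move=> intf intg [N [mN PN sub]].
rewrite unlock (negligible_integral mN) // [leRHS](negligible_integral mN) //.
have mD : measurable (setT `\` N) by exact: measurableD.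
apply: le_integral.
- exact: mD.
- exact: (integrableS measurableT mD _ intf).
- exact: (integrableS measurableT mD _ intg).
move=> x; rewrite inE => -[_ Nx]; rewrite lee_fin; apply: contrapT => fx.
by apply: Nx; apply: sub.
Qed.


Lemma expect_le_ae2 (f g : T -> R) :
  measurable_fun setT f -> P.-integrable setT (EFin \o g) ->
  {ae P, forall x, f x <= g x} -> ('E_P[f] <= 'E_P[g])%E.
Proof.
move=> mf intg hfg.
have mF : measurable_fun setT (fun x => (f x)%:E : \bar R) by exact/measurable_EFinP.
have mG : measurable_fun setT (fun x => (g x)%:E : \bar R).
  by move/integrableP : intg => [].
rewrite unlock integralE [leRHS]integralE; apply: leeB.
- apply: (ae_ge0_le_integral measurableT _ (measurable_funepos mF) _ (measurable_funepos mG)).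
  + by move=> x ?; rewrite funeposE le_max lexx orbT.
  + by move=> x ?; rewrite funeposE le_max lexx orbT.
  case: hfg => N [mN PN sub]; exists N; split => // x /= hx; apply: sub => /= hfx.
  apply: hx => _.
  by apply: (@funepos_le _ _ [set x] (fun x => (f x)%:E) (fun x => (g x)%:E)); rewrite ?inE //= => y; rewrite inE /= => ->; rewrite lee_fin.
- apply: (ae_ge0_le_integral measurableT _ (measurable_funeneg mG) _ (measurable_funeneg mF)).
  + by move=> x ?; rewrite funenegE le_max lexx orbT.
  + by move=> x ?; rewrite funenegE le_max lexx orbT.
  case: hfg => N [mN PN sub]; exists N; split => // x /= hx; apply: sub => /= hfx.
  apply: hx => _.
  by apply: (@funeneg_le _ _ [set x] (fun x => (f x)%:E) (fun x => (g x)%:E)); rewrite ?inE //= => y; rewrite inE /= => ->; rewrite lee_fin.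
Qed.

End helpers.

Section hfun.
Context (R : realType) (z a : R).
Definition hh (x : R) : R := (`|x - z| - `|x - z - 2 * a|) / 2.

Lemma hh_bound (Ha : 0 < a) x : `|hh x| <= a.
Proof.
rewrite /hh.
have := ler_dist_dist (x - z) (x - z - 2 * a).
rewrite (_ : x - z - (x - z - 2 * a) = 2 * a); last by ring.
rewrite (ger0_norm (_ : 0 <= 2 * a)); last lra.
rewrite !ler_norml => /andP[H1 H2]; apply/andP; split; lra.
Qed.

Lemma hh_mono (Ha : 0 < a) x y : x <= y -> hh x <= hh y.
Proof.
move=> xy; rewrite /hh ler_pM2r ?invr_gt0 //.
have [h1|h1] := lerP 0 (x - z); have [h2|h2] := lerP 0 (y - z);
have [h3|h3] := lerP 0 (x - z - 2 * a); have [h4|h4] := lerP 0 (y - z - 2 * a);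
rewrite ?(ger0_norm h1) ?(ltr0_norm h1) ?(ger0_norm h2) ?(ltr0_norm h2)
        ?(ger0_norm h3) ?(ltr0_norm h3) ?(ger0_norm h4) ?(ltr0_norm h4); lra.
Qed.

Lemma hh_mid (Ha : 0 < a) x : 0 <= x - z <= 2 * a -> hh x = x - z - a.
Proof.
move=> /andP[h1 h2]; rewrite /hh (ger0_norm h1) (ler0_norm); last lra.
by field.
Qed.

Lemma hh_cont : continuous hh.
Proof.
move=> x; rewrite /hh.
apply: cvgM; [|exact: cvg_cst]; apply: cvgB; apply: cvg_norm.
  by apply: cvgB; [exact: cvg_id|exact: cvg_cst].
by apply: cvgB; [apply: cvgB; [exact: cvg_id|exact: cvg_cst]|exact: cvg_cst].
Qed.

End hfun.


Lemma key_ineq (R : realType) (a sigma t hv : R) : 0 < a -> 0 < sigma ->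
  `|hv| <= a -> t * hv <= a / 2 * sigma + a / (2 * sigma) * (t * t).
Proof.
move=> Ha Hs; rewrite ler_norml => /andP[h1 h2].
set u := a / (2 * sigma).
have hu : 0 < u by rewrite /u divr_gt0 // mulr_gt0.
have ha : a = 2 * u * sigma by rewrite /u; field; rewrite gt_eqF.
rewrite ha in h1 h2 *.
have -> : 2 * u * sigma / 2 * sigma = u * (sigma * sigma) by field.
have [t0|t0] := lerP 0 t.
- have : 0 <= u * ((sigma - t) * (sigma - t)).
    by apply: mulr_ge0; [exact: ltW | rewrite -expr2; exact: sqr_ge0].
  nra.
- have : 0 <= u * ((sigma + t) * (sigma + t)).
    by apply: mulr_ge0; [exact: ltW | rewrite -expr2; exact: sqr_ge0].
  nra.
Qed.

Theorem lemma2p1 (d : measure_display) (T : measurableType d) (R : realType)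
  (P : probability T R) (Y Ys : {RV P >-> R}) (mu sigma : R)
  (HY0 : {ae P, forall w, 0 <= Y w})
  (HY2 : (Y : T -> R) \in Lfun P 2%:E)
  (Hmu : ('E_P[Y] = mu%:E)%E) (Hmu0 : 0 < mu)
  (Hsig : ('V_P[Y] = (sigma ^+ 2)%:E)%E) (Hsig0 : 0 < sigma)
  (Hsb : size_bias P Y Ys)
  (HYs : {ae P, forall w, Y w <= Ys w})
  (z a : R) (Ha : 0 < a) :
  let W := fun v : T => (Y v - mu) / sigma in
  let Ws := fun v : T => (Ys v - mu) / sigma in
  ((mu / sigma)%:E *
   'E_P[fun w =>
          ((Ws w - W w) * \1_[set v : T | Ws v - W v <= a] w
                        * \1_[set v : T | z <= W v <= z + a] w)%R]
   <= a%:E)%E.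
Proof.
cbv zeta.
set W := (fun v : T => (Y v - mu) / sigma).
set Ws := (fun v : T => (Ys v - mu) / sigma).
pose h := @hh R z a.
pose hW := fun w => h (W w).
pose hWs := fun w => h (Ws w).
have mY : measurable_fun setT (Y : T -> R) by [].
have mYs : measurable_fun setT (Ys : T -> R) by [].
have caff : continuous (fun y : R => (y - mu) / sigma).
  move=> y; apply: cvgM; [apply: cvgB; [exact: cvg_id|exact: cvg_cst]|exact: cvg_cst].
have maff : measurable_fun setT (fun y : R => (y - mu) / sigma).
  exact: continuous_measurable_fun.
have mh : measurable_fun setT h by apply: continuous_measurable_fun; exact: hh_cont.
have mW : measurable_fun setT W := measurableT_comp maff mY.
have mWs : measurable_fun setT Ws := measurableT_comp maff mYs.
have mhW : measurable_fun setT hW := measurableT_comp mh mW.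
have mhWs : measurable_fun setT hWs := measurableT_comp mh mWs.
have ihW : P.-integrable setT (EFin \o hW).
  by apply: int_bdd => //; exists a => x; exact: hh_bound.
have ihWs : P.-integrable setT (EFin \o hWs).
  by apply: int_bdd => //; exists a => x; exact: hh_bound.
have LhW : hW \in Lfun P 1 by apply/Lfun1_integrable.
have LhWs : hWs \in Lfun P 1 by apply/Lfun1_integrable.
have LY : (Y : T -> R) \in Lfun P 1 by apply: Lfun_subset12 => //; exact: fin_num_measure.
have fin1 : 'E_P[hWs]%E \is a fin_num by exact: expectation_fin_num.
have fin2 : 'E_P[hW]%E \is a fin_num by exact: expectation_fin_num.
set r1 := fine 'E_P[hWs]%E.
set r2 := fine 'E_P[hW]%E.
have E1 : 'E_P[hWs]%E = r1%:E by rewrite fineK.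
have E2 : 'E_P[hW]%E = r2%:E by rewrite fineK.
have step1 : ('E_P[fun w =>
          ((Ws w - W w) * \1_[set v : T | Ws v - W v <= a] w
                        * \1_[set v : T | z <= W v <= z + a] w)%R]
   <= (r1 - r2)%:E)%E.
  have mA : measurable [set v : T | Ws v - W v <= a].
    have -> : [set v : T | Ws v - W v <= a] = setT `&` ((Ws \- W)%R @^-1` `]-oo, a]).
      by apply/seteqP; split => v /=; rewrite in_itv /= ?andbT; [move=> ->|case].
    exact: (measurable_funB mWs mW) measurableT _ (measurable_itv _).
  have mB : measurable [set v : T | z <= W v <= z + a].
    have -> : [set v : T | z <= W v <= z + a] = setT `&` (W @^-1` `[z, z + a]).
      by apply/seteqP; split => v /=; rewrite in_itv /=; [move=> ->|case].
    exact: mW measurableT _ (measurable_itv _).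
  have mF : measurable_fun setT (fun w =>
          ((Ws w - W w) * \1_[set v : T | Ws v - W v <= a] w
                        * \1_[set v : T | z <= W v <= z + a] w)%R).
    apply: measurable_funM; [apply: measurable_funM|].
    - exact: measurable_funB mWs mW.
    - exact: measurable_indic.
    - exact: measurable_indic.
  have iG : P.-integrable setT (EFin \o (hWs \- hW)%R).
    by apply/Lfun1_integrable; rewrite rpredB.
  apply: le_trans (@expect_le_ae2 _ _ _ P _ _ mF iG _) _; last first.
    by rewrite expectationB // E1 E2 EFinB.
  case: HYs => N [mN PN sub]; exists N; split => // w /= hw; apply: sub => /= hY; apply: hw.
  have hWW : W w <= Ws w by rewrite /W /Ws ler_pM2r ?invr_gt0 // lerD2r.
  have mono : h (W w) <= h (Ws w) := hh_mono _ _ _ Ha _ _ hWW.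
  rewrite !indicE.
  have [wA|wA] := boolP (w \in [set v : T | Ws v - W v <= a]);
  have [wB|wB] := boolP (w \in [set v : T | z <= W v <= z + a]);
    rewrite /= ?mulr1n ?mulr0n ?mulr1 ?mulr0 ?subr_ge0 //.
  rewrite inE /= in wA; rewrite inE /= in wB.
  move: wB => /andP[wB1 wB2].
  rewrite /hWs /hW /h (hh_mid _ _ _ Ha (Ws w)); last by apply/andP; split; lra.
  rewrite (hh_mid _ _ _ Ha (W w)); last by apply/andP; split; lra.
  lra.
have step2 : ('E_P[(Y \* hW)%R] = (mu * r1)%:E)%E.
  have hc : continuous (fun y => h ((y - mu) / sigma)).
    move=> y; exact: (@continuous_comp _ _ _ (fun y => (y - mu) / sigma) h y (caff y) (hh_cont _ _ _ _)).
  have HH : ('E_P[(Y \* hW)%R] = 'E_P[Y] * 'E_P[hWs])%E.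
    exact: (Hsb _ hc (ex_intro _ a (fun x => hh_bound _ _ _ Ha _))).
  by rewrite HH Hmu E1 -EFinM.
have LYhW : (Y \* hW)%R \in Lfun P 1.
  apply/Lfun1_integrable.
  have iY : P.-integrable setT (EFin \o Y) by apply/Lfun1_integrable.
  have := integrableMl measurableT iY mhW.
  have bd : [bounded hW x | x in [set: T]].
    exists a; split; first by rewrite num_real.
    move=> y My x _; exact: le_trans (hh_bound _ _ _ Ha _) (ltW My).
  move=> /(_ bd); apply: eq_integrable => // x _ /=.
have LmhW : (mu \o* hW)%R \in Lfun P 1 by apply: Lfun_scale.
have step3 : ('E_P[fun w => ((Y w - mu) * hW w)%R] = (mu * r1 - mu * r2)%:E)%E.
  have -> : (fun w => ((Y w - mu) * hW w)%R) = ((Y \* hW) \- (mu \o* hW))%R.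
    by apply/funext => w /=; rewrite mulrBl [mu * _]mulrC.
  rewrite expectationB // step2 expectationZl // E2.
  by rewrite EFinB EFinM.
have step4 : ('E_P[fun w => ((Y w - mu) * hW w)%R] <= (a * sigma)%:E)%E.
  have LYm : (Y \- cst mu)%R \in Lfun P 2%:E.
    by rewrite rpredB ?lee1n // => ?; apply: Lfun_cst.
  have LS : ((Y \- cst mu) \* (Y \- cst mu))%R \in Lfun P 1 := Lfun2_mul_Lfun1 LYm LYm.
  have ES : ('E_P[((Y \- cst mu) \* (Y \- cst mu))%R] = (sigma ^+ 2)%:E)%E.
    rewrite -Hsig /variance [in RHS]unlock Hmu /=.
    by [].
  pose k := a / (2 * sigma).
  pose K := (cst (a / 2 * sigma) \+ k \o* ((Y \- cst mu) \* (Y \- cst mu)))%R.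
  have LK : K \in Lfun P 1.
    by rewrite rpredD //; [apply: Lfun_cst | apply: Lfun_scale].
  have EK : ('E_P[K] = (a * sigma)%:E)%E.
    rewrite expectationD; [|exact: Lfun_cst|exact: Lfun_scale].
    have -> : ('E_P[cst (a / 2 * sigma)%R] = (a / 2 * sigma)%:E)%E by exact: expectation_cst.
    rewrite expectationZl // ES -EFinM -EFinD.
    by congr (_%:E); rewrite /k; field; rewrite gt_eqF.
  rewrite -EK; apply: expect_le_ae.
  - apply/Lfun1_integrable.
    have -> : (fun w => ((Y w - mu) * hW w)%R) = ((Y \* hW) \- (mu \o* hW))%R.
      by apply/funext => w /=; rewrite mulrBl [mu * _]mulrC.
    by rewrite rpredB.
  - by apply/Lfun1_integrable.
  apply: aeW => w; rewrite /K /=.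
  rewrite [_ * k]mulrC; apply: key_ineq => //; exact: hh_bound.
rewrite step3 lee_fin in step4.
apply: le_trans (lee_wpmul2l _ step1) _; first by rewrite lee_fin ltW // divr_gt0.
rewrite -EFinM lee_fin mulrAC ler_pdivrMr // mulrBr; lra.
Qed.
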